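(* In the setting described in the context, for every $t\in\{0,1,\dots,T\}$ the function $\tilde V^{(t)}_\theta(s)$, viewed as a function of $(\theta,s)$, is Lipschitz with constant $L_{\tilde V}^{(t)}=3T^2L_{\tilde R_\theta}\bar L_{\tilde f_\theta}^{T-t-1}$.
   Context: Transitions $s_{t+1}=f(s_t,a_t)+\zeta_t$ with $\zeta_t\sim p(\zeta)$ i.i.d.; deterministic policy $\pi_\theta$ perturbed by action noise $\xi\sim p_\xi$: $a=\pi_\theta(s)+\xi$. Let $\tilde f_\theta(s,\xi)=f(s,\pi_\theta(s)+\xi)$ and $\tilde R_\theta(s)=\mathbb{E}_{p_\xi}[R(s,\pi_\theta(s)+\xi)]$. Value functions: $\tilde V^{(T)}_\theta\equiv0$ and $\tilde V^{(t)}_\theta(s)=\mathbb{E}_{p_\xi(\xi),p(\zeta)}[\tilde R_\theta(s)+\tilde V^{(t+1)}_\theta(\tilde f_\theta(s,\xi)+\zeta)]$. $L_h$ is a Lipschitz constant (Euclidean norm) of $h$ jointly in all its arguments ($(\theta,s)$, resp. $(\theta,s,\xi)$), and $\bar L_h=\max\{L_{\nabla h},L_h,1\}$. Standing assumption: $\tilde f_\theta,\tilde R_\theta$ are Lipschitz and twice continuously differentiable with Lipschitz first derivative. *)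

(* Defs.v *)
From HB Require Import structures.
From mathcomp Require Import all_boot all_order all_algebra.
From mathcomp Require Import all_classical all_reals all_analysis.
Set Implicit Arguments. Unset Strict Implicit. Unset Printing Implicit Defensive.
Import Order.TTheory GRing.Theory Num.Theory.
Import numFieldNormedType.Exports.
Local Open Scope classical_set_scope.
Local Open Scope ring_scope.

Section Defs.
Variable R : realType.

Definition enorm (m k : nat) (A : 'M[R]_(m, k)) : R :=
  Num.sqrt (\sum_(i < m) \sum_(j < k) A i j ^+ 2).

Definition ebasis (k : nat) (j : 'I_k) : 'rV[R]_k := delta_mx 0 j.

Definition lipschitz_vec (k n : nat) (L : R) (h : 'rV[R]_k -> 'rV[R]_n) :=
  forall x y, enorm (h x - h y) <= L * enorm (x - y).

Definition lipschitz_scal (k : nat) (L : R) (h : 'rV[R]_k -> R) :=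
  forall x y, `|h x - h y| <= L * enorm (x - y).

Definition twice_cont_diff (k : nat) (V : normedModType R) (h : 'rV[R]_k -> V) :=
  [/\ forall x, differentiable h x,
      forall (j : 'I_k) x, differentiable (fun y => 'D_(ebasis j) h y) x &
      forall (j l : 'I_k),
        continuous (fun y => 'D_(ebasis l) (fun z => 'D_(ebasis j) h z) y)].

(* For vector-valued maps we use the library's Jacobian [jacobian] (derive.v),
   the (k x n) matrix of the differential 'd h x. *)

Definition gradient (k : nat) (h : 'rV[R]_k -> R) (x : 'rV[R]_k) : 'rV[R]_k :=
  \row_(j < k) 'D_(ebasis j) h x.

Variables (dx dz : measure_display) (Ox : measurableType dx) (Oz : measurableType dz).
Variables (Px : probability Ox R) (Pz : probability Oz R).
Variables (p n a : nat).
(* action noise xi ~ p_xi (a random vector in R^a on (Ox,Px)),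
   transition noise zeta ~ p(zeta) (a random vector in R^n on (Oz,Pz)),
   drawn independently (product measure). *)
Variables (xi : Ox -> 'rV[R]_a) (zeta : Oz -> 'rV[R]_n).
Variables (f : 'rV[R]_n -> 'rV[R]_a -> 'rV[R]_n)
          (pi : 'rV[R]_p -> 'rV[R]_n -> 'rV[R]_a)
          (Rw : 'rV[R]_n -> 'rV[R]_a -> R).

Definition ftil (th : 'rV[R]_p) (s : 'rV[R]_n) (e : 'rV[R]_a) : 'rV[R]_n :=
  f s (pi th s + e).

Definition ftilJ (z : 'rV[R]_(p + n + a)) : 'rV[R]_n :=
  ftil (lsubmx (lsubmx z)) (rsubmx (lsubmx z)) (rsubmx z).

Definition Rtil (th : 'rV[R]_p) (s : 'rV[R]_n) : R :=
  Rintegral Px setT (fun w => Rw s (pi th s + xi w)).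

Definition RtilJ (x : 'rV[R]_(p + n)) : R := Rtil (lsubmx x) (rsubmx x).

Fixpoint Vrem (k : nat) (x : 'rV[R]_(p + n)) : R :=
  match k with
  | 0 => 0
  | k'.+1 =>
      Rintegral (Px \x Pz)%E setT
        (fun w : Ox * Oz =>
           RtilJ x
           + Vrem k' (row_mx (lsubmx x)
                         (ftil (lsubmx x) (rsubmx x) (xi w.1) + zeta w.2)))
  end.

Definition Vtil (T t : nat) (x : 'rV[R]_(p + n)) : R := Vrem (T - t) x.

End Defs.

(* Main.v *)
Require Import Defs.
From HB Require Import structures.
From mathcomp Require Import all_boot all_order all_algebra.
From mathcomp Require Import all_classical all_reals all_analysis.
From mathcomp Require Import measurable_realfun.
From mathcomp Require Import ring lra zify.
Import Order.TTheory GRing.Theory Num.Theory.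
Import numFieldNormedType.Exports.
Local Open Scope classical_set_scope.
Local Open Scope ring_scope.
Set Implicit Arguments. Unset Strict Implicit. Unset Printing Implicit Defensive.

Section Enorm.
Variable R : realType.

Definition ss (k : nat) (x : 'rV[R]_k) : R := \sum_(j < k) x 0 j ^+ 2.

Lemma enormE k (x : 'rV[R]_k) : enorm x = Num.sqrt (ss x).
Proof. by rewrite /enorm big_ord1. Qed.

Lemma ss_ge0 k (x : 'rV[R]_k) : 0 <= ss x.
Proof. by apply: sumr_ge0 => j _; exact: sqr_ge0. Qed.

Lemma enorm_ge0 k (x : 'rV[R]_k) : 0 <= enorm x.
Proof. by rewrite enormE sqrtr_ge0. Qed.

Lemma ssN k (x : 'rV[R]_k) : ss (- x) = ss x.
Proof. by apply: eq_bigr => j _; rewrite mxE sqrrN. Qed.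

Lemma enormN k (x : 'rV[R]_k) : enorm (- x) = enorm x.
Proof. by rewrite !enormE ssN. Qed.

Lemma enormB k (x y : 'rV[R]_k) : enorm (x - y) = enorm (y - x).
Proof. by rewrite -enormN opprB. Qed.

Lemma enorm0 k : enorm (0 : 'rV[R]_k) = 0.
Proof.
rewrite enormE /ss (eq_bigr (fun _ => 0)) ?big1 ?sqrtr0 // => j _.
by rewrite mxE expr0n.
Qed.

Lemma enorm_eq0 k (x : 'rV[R]_k) : enorm x = 0 -> x = 0.
Proof.
rewrite enormE => /eqP; rewrite sqrtr_eq0 => H.
have H0 : ss x = 0 by apply/eqP; rewrite eq_le H ss_ge0.
move/eqP: H0; rewrite psumr_eq0 => [/allP Hall|j _]; last exact: sqr_ge0.
apply/rowP => j; rewrite mxE.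
have := Hall j (mem_index_enum j); rewrite implyTb sqrf_eq0 => /eqP //.
Qed.

Lemma cauchy_schwarz k (x y : 'rV[R]_k) :
  (\sum_j x 0 j * y 0 j) ^+ 2 <= ss x * ss y.
Proof.
set A := ss x; set B := ss y; set C := \sum_j x 0 j * y 0 j.
have hB := ss_ge0 y.
have [B0|Bpos] := eqVneq B 0.
  have y0 : forall j, y 0 j = 0.
    move/eqP: B0; rewrite psumr_eq0 => [/allP Hall j|j _]; last exact: sqr_ge0.
    by have := Hall j (mem_index_enum j); rewrite implyTb sqrf_eq0 => /eqP.
  rewrite /C (eq_bigr (fun _ => 0)) ?big1 // ?expr0n ?B0 ?mulr0 // => j _.
  by rewrite y0 mulr0.
have key : 0 <= \sum_j (B * x 0 j - C * y 0 j) ^+ 2.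
  by apply: sumr_ge0 => j _; exact: sqr_ge0.
have E : \sum_j (B * x 0 j - C * y 0 j) ^+ 2 = B * (A * B - C ^+ 2).
  rewrite (eq_bigr (fun j => B ^+ 2 * x 0 j ^+ 2 - (2 * B * C) * (x 0 j * y 0 j)
     + C ^+ 2 * y 0 j ^+ 2)); last by move=> j _; ring.
  rewrite big_split big_split /= -!mulr_sumr sumrN -mulr_sumr.
  rewrite /A /B /C /ss; ring.
rewrite E in key.
have Bp : 0 < B by rewrite lt_def Bpos hB.
rewrite pmulr_rge0 // subr_ge0 in key.
exact: key.
Qed.

Lemma enormD k (x y : 'rV[R]_k) : enorm (x + y) <= enorm x + enorm y.
Proof.
rewrite !enormE.
have hx := ss_ge0 x; have hy := ss_ge0 y.
rewrite -(@ler_pXn2r _ 2) ?nnegrE ?addr_ge0 ?sqrtr_ge0 //.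
rewrite sqrrD !sqr_sqrtr // ?ss_ge0 //.
have -> : ss (x + y) = ss x + ss y + 2 * \sum_j x 0 j * y 0 j.
  rewrite /ss mulr_sumr -!big_split /=; apply: eq_bigr => j _; rewrite mxE; ring.
suff H : \sum_j x 0 j * y 0 j <= Num.sqrt (ss x) * Num.sqrt (ss y).
  rewrite mulr2n; lra.
have := cauchy_schwarz x y.
set C := \sum_j _.
move=> cs.
have [C0|C0] := leP C 0.
  by apply: le_trans C0 _; rewrite mulr_ge0 ?sqrtr_ge0.
rewrite -sqrtrM // -(@ler_pXn2r _ 2) ?nnegrE ?sqrtr_ge0 ?(ltW C0) //.
by rewrite sqr_sqrtr // mulr_ge0.
Qed.

Lemma ss_row_mx k1 k2 (A : 'rV[R]_k1) (B : 'rV[R]_k2) :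
  ss (row_mx A B) = ss A + ss B.
Proof.
by rewrite /ss big_split_ord /=; congr (_ + _); apply: eq_bigr => j _;
  rewrite ?row_mxEl ?row_mxEr.
Qed.

Lemma ss0 k : ss (0 : 'rV[R]_k) = 0.
Proof. by rewrite /ss big1 // => j _; rewrite mxE expr0n. Qed.

Lemma enorm_row0 k1 k2 (A : 'rV[R]_k1) : enorm (row_mx A (0 : 'rV[R]_k2)) = enorm A.
Proof. by rewrite !enormE ss_row_mx ss0 addr0. Qed.

Lemma enorm_0row k1 k2 (B : 'rV[R]_k2) : enorm (row_mx (0 : 'rV[R]_k1) B) = enorm B.
Proof. by rewrite !enormE ss_row_mx ss0 add0r. Qed.

Lemma enorm_row_mx_le k1 k2 (A : 'rV[R]_k1) (B : 'rV[R]_k2) :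
  enorm (row_mx A B) <= enorm A + enorm B.
Proof.
have -> : row_mx A B = row_mx A 0 + row_mx 0 B by rewrite add_row_mx addr0 add0r.
by apply: le_trans (enormD _ _) _; rewrite enorm_row0 enorm_0row.
Qed.

Lemma enorm_lsub_le k1 k2 (x : 'rV[R]_(k1 + k2)) : enorm (lsubmx x) <= enorm x.
Proof.
rewrite -{2}(hsubmxK x) !enormE ss_row_mx ler_sqrt ?addr_ge0 ?ss_ge0 //.
by rewrite lerDl ss_ge0.
Qed.

Lemma enorm_rsub_le k1 k2 (x : 'rV[R]_(k1 + k2)) : enorm (rsubmx x) <= enorm x.
Proof.
rewrite -{2}(hsubmxK x) !enormE ss_row_mx ler_sqrt ?addr_ge0 ?ss_ge0 //.
by rewrite lerDr ss_ge0.
Qed.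

Lemma enorm_rev k (x y : 'rV[R]_k) : `|enorm x - enorm y| <= enorm (x - y).
Proof.
have h1 := enormD (x - y) y; have h2 := enormD (y - x) x.
rewrite subrK in h1; rewrite subrK enormB in h2.
rewrite ler_norml; apply/andP; split; lra.
Qed.

End Enorm.

Section Meas.
Variable R : realType.

Lemma rat_approx m (v : 'rV[R]_m) (del : R) : 0 < del ->
  exists r : 'rV[rat]_m, enorm (v - map_mx ratr r) < del.
Proof.
move=> d0.
set eta := del / (m.+1)%:R.
have m0 : (0 : R) < (m.+1)%:R by rewrite ltr0n.
have e0 : 0 < eta by rewrite divr_gt0.
have : forall j : 'I_m, exists q : rat, ratr q \in `]v 0 j - eta, v 0 j + eta[.
  by move=> j; apply: rat_in_itvoo; rewrite ltrD2l -subr_gt0 opprK -mulr2n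
     mulrn_wgt0.
case/fin_all_exists => qf Hq.
exists (\row_j qf j).
rewrite enormE -[X in _ < X](gtr0_norm d0) -sqrtr_sqr ltr_sqrt ?exprn_gt0 //.
apply: (@le_lt_trans _ _ (\sum_(j < m) eta ^+ 2)).
  apply: ler_sum => j _; rewrite !mxE.
  have := Hq j; rewrite in_itv /= => /andP [h1 h2].
  nra.
rewrite sumr_const card_ord.
have -> : eta ^+ 2 *+ m = del ^+ 2 * (m%:R / (m.+1)%:R ^+ 2).
  by rewrite /eta -mulr_natr; field; rewrite gt_eqF.
rewrite -[X in _ < X]mulr1 ltr_pM2l ?exprn_gt0 //.
rewrite ltr_pdivrMr ?exprn_gt0 // mul1r.
rewrite -natrX ltr_nat; nia.
Qed.

Definition qseq m (j : nat) : 'rV[R]_m :=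
  if @unpickle ('rV[rat]_m) j is Some r then map_mx ratr r else 0.

Lemma qseq_dense m (v : 'rV[R]_m) (del : R) : 0 < del ->
  exists j, enorm (v - qseq m j) < del.
Proof.
move=> /(rat_approx v) [r Hr]; exists (pickle r).
by rewrite /qseq pickleK.
Qed.

Lemma enorm_meas d (T : measurableType d) m (u : T -> 'rV[R]_m) (q : 'rV[R]_m) :
  (forall i, measurable_fun setT (fun w => u w 0 i)) ->
  measurable_fun setT (fun w => enorm (u w - q)).
Proof.
move=> mu.
have -> : (fun w => enorm (u w - q)) =
   Num.sqrt \o (fun w => \sum_(i <- index_enum 'I_m) (u w 0 i - q 0 i) ^+ 2).
  by apply/funext => w; rewrite /= enormE /ss; congr Num.sqrt;
     apply: eq_bigr => i _; rewrite !mxE.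
apply: (measurableT_comp (continuous_measurable_fun (@sqrt_continuous R))).
apply: measurable_sum => i.
apply: measurable_funX; apply: measurable_funB => //; exact: measurable_cst.
Qed.

Lemma lip_comp_meas d (T : measurableType d) m (h : 'rV[R]_m -> R) (K : R)
    (u : T -> 'rV[R]_m) : 0 <= K ->
  (forall x y, `|h x - h y| <= K * enorm (x - y)) ->
  (forall i, measurable_fun setT (fun w => u w 0 i)) ->
  measurable_fun setT (fun w => h (u w)).
Proof.
move=> K0 hL mu.
pose g := fun (j : nat) (w : T) => h (qseq m j) + K * enorm (u w - qseq m j).
have mg : forall j, measurable_fun setT (g j).
  move=> j; apply: measurable_funD; first exact: measurable_cst.
  apply: measurable_funM; first exact: measurable_cst.
  exact: enorm_meas.
have lb : forall w j, h (u w) <= g j w.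
  move=> w j; rewrite /g -lerBlDl.
  by apply: le_trans (ler_norm _) (hL _ _).
have E : forall w, infs (g^~ w) 0 = h (u w).
  move=> w; rewrite /infs /=.
  apply/le_anti/andP; split; last first.
    apply: lb_le_inf; first by exists (g 0 w), 0%N.
    by move=> _ [j _ <-]; exact: lb.
  apply/ler_addgt0Pr => e e0.
  have [j Hj] := @qseq_dense m (u w) (e / (K *+ 2 + 1)) (divr_gt0 e0 (ltr_wpDl (mulrn_wge0 2 K0) ltr01)).
  apply: (@le_trans _ _ (g j w)).
    apply: ge_inf; last by exists j.
    by exists (h (u w)) => _ [k _ <-]; exact: lb.
  rewrite /g.
  have h1 : h (qseq m j) <= h (u w) + K * enorm (u w - qseq m j).
    have := hL (qseq m j) (u w); rewrite enormB => H.
    by rewrite -lerBlDl; apply: le_trans (ler_norm _) H.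
  have h2 : K * enorm (u w - qseq m j) <= K * (e / (K *+ 2 + 1)).
    by rewrite ler_wpM2l // ltW.
  have h3 : K * (e / (K *+ 2 + 1)) * 2 <= e.
    have p0 : 0 < K *+ 2 + 1 by rewrite ltr_wpDl // mulrn_wge0.
    have dp : e / (K *+ 2 + 1) * (K *+ 2 + 1) = e by rewrite divfK // gt_eqF.
    have dd : 0 <= e / (K *+ 2 + 1) by rewrite divr_ge0 // ltW.
    move: dp dd; set dl := e / _; rewrite mulr2n => dp dd; nra.
  lra.
apply: (eq_measurable_fun (fun w => infs (g^~ w) 0)).
  by move=> w _; rewrite E.
apply: measurable_fun_infs => // w _.
by exists (h (u w)) => _ [j _ <-]; exact: lb.
Qed.

End Meas.

Section Main.
Variables (R : realType) (dx dz : measure_display) (Ox : measurableType dx)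
  (Oz : measurableType dz) (Px : probability Ox R) (Pz : probability Oz R)
  (p n a : nat) (xi : Ox -> 'rV[R]_a) (zeta : Oz -> 'rV[R]_n)
  (f : 'rV[R]_n -> 'rV[R]_a -> 'rV[R]_n)
  (pi : 'rV[R]_p -> 'rV[R]_n -> 'rV[R]_a)
  (Rw : 'rV[R]_n -> 'rV[R]_a -> R) (Lf LR : R).
Hypothesis mxi : forall i : 'I_a, measurable_fun setT (fun w => xi w 0 i).
Hypothesis mzeta : forall i : 'I_n, measurable_fun setT (fun w => zeta w 0 i).
Hypothesis ixi : Px.-integrable setT (fun w => (enorm (xi w))%:E).
Hypothesis izeta : Pz.-integrable setT (fun w => (enorm (zeta w))%:E).
Hypothesis HfL : lipschitz_vec Lf (ftilJ f pi (p:=p)).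
Hypothesis HRL : lipschitz_scal LR (RtilJ Px xi pi Rw (p:=p)).

Local Notation PP := (Px \x Pz)%E.

Lemma enorm_lip k : forall x y : 'rV[R]_k, `|enorm x - enorm y| <= 1 * enorm (x - y).
Proof. by move=> x y; rewrite mul1r enorm_rev. Qed.

Lemma int_xi1 : PP.-integrable setT (fun w : Ox * Oz => (enorm (xi w.1))%:E).
Proof.
have mE : measurable_fun setT (fun w : Ox * Oz => enorm (xi w.1)).
  apply: (@lip_comp_meas _ _ _ _ (@enorm R 1 a) 1 (fun w : Ox * Oz => xi w.1)) => //.
    exact: enorm_lip.
  by move=> i; apply: (measurableT_comp (mxi i)); exact: measurable_fst.
apply/integrableP; split; first exact/measurable_EFinP.
rewrite fubini_tonelli1 //=; last first.
  exact/measurable_EFinP/measurableT_comp.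
case/integrableP: ixi => _ H.
rewrite (eq_integral (fun x => `|(enorm (xi x))%:E|)%E) // => x _.
rewrite /fubini_F /= integral_cst //. have P1 : Pz [set: Oz] = 1%E := probability_setT Pz. rewrite [X in (_ * X)%E](_ : _ = 1%E) ?mule1 //.
Qed.

Lemma int_zeta2 : PP.-integrable setT (fun w : Ox * Oz => (enorm (zeta w.2))%:E).
Proof.
have mE : measurable_fun setT (fun w : Ox * Oz => enorm (zeta w.2)).
  apply: (@lip_comp_meas _ _ _ _ (@enorm R 1 n) 1 (fun w : Ox * Oz => zeta w.2)) => //.
    exact: enorm_lip.
  by move=> i; apply: (measurableT_comp (mzeta i)); exact: measurable_snd.
apply/integrableP; split; first exact/measurable_EFinP.
rewrite fubini_tonelli2 //=; last first.
  exact/measurable_EFinP/measurableT_comp.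
case/integrableP: izeta => _ H.
rewrite (eq_integral (fun x => `|(enorm (zeta x))%:E|)%E) // => x _.
rewrite /fubini_G /= integral_cst //.
rewrite [X in (_ * X)%E](_ : _ = 1%E) ?mule1 //.
exact: probability_setT.
Qed.

Lemma PP_setT : PP setT = 1%E.
Proof.
rewrite -setXTT product_measure1E //.
rewrite [X in (X * _)%E](_ : _ = 1%E); last exact: probability_setT.
rewrite [X in (_ * X)%E](_ : _ = 1%E); last exact: probability_setT.
by rewrite mule1.
Qed.

Lemma int_cst (c : R) : PP.-integrable setT (fun w : Ox * Oz => c%:E).
Proof.
apply/integrableP; split; first exact: measurable_cst.
by rewrite integral_cst // [X in (_ * X)%E]PP_setT mule1 ltry.
Qed.

Lemma ftilJE (th : 'rV[R]_p) (s : 'rV[R]_n) (e : 'rV[R]_a) :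
  ftilJ f pi (row_mx (row_mx th s) e) = ftil f pi th s e.
Proof. by rewrite /ftilJ !row_mxKl !row_mxKr. Qed.

Lemma ftil_lip_x (x y : 'rV[R]_(p + n)) e :
  enorm (ftil f pi (lsubmx x) (rsubmx x) e - ftil f pi (lsubmx y) (rsubmx y) e)
  <= Lf * enorm (x - y).
Proof.
rewrite -!ftilJE !hsubmxK; apply: le_trans (HfL _ _) _.
by rewrite opp_row_mx add_row_mx subrr enorm_row0.
Qed.

Lemma ftil_lip_e th s (e e' : 'rV[R]_a) :
  enorm (ftil f pi th s e - ftil f pi th s e') <= Lf * enorm (e - e').
Proof.
rewrite -!ftilJE; apply: le_trans (HfL _ _) _.
by rewrite opp_row_mx add_row_mx subrr enorm_0row.
Qed.

Lemma lsubB k1 k2 (x y : 'rV[R]_(k1 + k2)) : lsubmx x - lsubmx y = lsubmx (x - y).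
Proof. by apply/rowP => j; rewrite !mxE. Qed.

Lemma rsubB k1 k2 (x y : 'rV[R]_(k1 + k2)) : rsubmx x - rsubmx y = rsubmx (x - y).
Proof. by apply/rowP => j; rewrite !mxE. Qed.

Local Notation V := (Vrem Px Pz xi zeta f pi Rw).

Definition Gfun k (x : 'rV[R]_(p + n)) (w : Ox * Oz) : R :=
  RtilJ Px xi pi Rw x
  + V k (row_mx (lsubmx x) (ftil f pi (lsubmx x) (rsubmx x) (xi w.1) + zeta w.2)).

Lemma VS k x : V k.+1 x = Rintegral PP setT (Gfun k x).
Proof. by []. Qed.

Lemma intG k (K : R) : 0 <= K ->
  (forall x y, `|V k x - V k y| <= K * enorm (x - y)) ->
  forall x, PP.-integrable setT (EFin \o Gfun k x).
Proof.
move=> K0 HK x.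
set th := lsubmx x; set s := rsubmx x.
pose h := fun v : 'rV[R]_(a + n) => V k (row_mx th (ftil f pi th s (lsubmx v) + rsubmx v)).
pose u := fun w : Ox * Oz => row_mx (xi w.1) (zeta w.2).
pose K' := K * (`|Lf| + 1).
have K'0 : 0 <= K' by rewrite mulr_ge0 // addr_ge0.
have hL : forall v v', `|h v - h v'| <= K' * enorm (v - v').
  move=> v v'; apply: le_trans (HK _ _) _.
  rewrite opp_row_mx add_row_mx subrr enorm_0row /K' -mulrA ler_wpM2l //.
  rewrite opprD addrACA.
  apply: le_trans (enormD _ _) _.
  rewrite mulrDl mul1r; apply: lerD.
    apply: le_trans (ftil_lip_e _ _ _ _) _.
    rewrite lsubB; apply: le_trans (_ : `|Lf| * enorm (lsubmx (v - v')) <= _).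
      by rewrite ler_wpM2r ?enorm_ge0 // ler_norm.
    by rewrite ler_wpM2l // enorm_lsub_le.
  by rewrite rsubB enorm_rsub_le.
have hu : forall w, Gfun k x w = RtilJ Px xi pi Rw x + h (u w).
  by move=> w; rewrite /Gfun /h /u row_mxKl row_mxKr.
have mu : forall i, measurable_fun setT (fun w => u w 0 i).
  move=> i; rewrite /u; case: (split_ordP i) => j ->.
    under eq_fun do rewrite row_mxEl.
    by apply: (measurableT_comp (mxi j)); exact: measurable_fst.
  under eq_fun do rewrite row_mxEr.
  by apply: (measurableT_comp (mzeta j)); exact: measurable_snd.
have mh : measurable_fun setT (fun w => h (u w)) by exact: lip_comp_meas hL mu.
have mG : measurable_fun setT (Gfun k x).
  rewrite (_ : Gfun k x = fun w => RtilJ Px xi pi Rw x + h (u w)); last first.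
    by apply/funext => w; rewrite hu.
  by apply: measurable_funD => //; exact: measurable_cst.
set C := `|RtilJ Px xi pi Rw x| + `|h 0|.
have ig : PP.-integrable setT
    (fun w => (C + K' * (enorm (xi w.1) + enorm (zeta w.2)))%:E).
  have := integrableD measurableT (int_cst C)
    (integrableZl measurableT K' (integrableD measurableT int_xi1 int_zeta2)).
  apply: (eq_integrable measurableT) => w _ /=.
  by rewrite EFinD EFinM EFinD.
apply: (le_integrable measurableT) ig => //; first exact/measurable_EFinP.
move=> w _ /=.
rewrite lee_fin [X in _ <= X]ger0_norm; last first.
  by rewrite addr_ge0 ?mulr_ge0 ?addr_ge0 ?enorm_ge0.
rewrite hu /C -addrA.
apply: le_trans (ler_normD _ _) _; rewrite lerD2l.
have -> : h (u w) = h 0 + (h (u w) - h 0) by rewrite addrC subrK.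
apply: le_trans (ler_normD _ _) _; rewrite lerD2l.
apply: le_trans (hL _ _) _; rewrite subr0 ler_wpM2l //.
exact: enorm_row_mx_le.
Qed.

Lemma arith k (M c et e : R) : 1 <= M -> Lf <= M -> 0 <= c -> 0 <= et -> 0 <= e ->
  c * e + (c * k%:R ^+ 2 * M ^+ k.-1 * et + c * k%:R * M ^+ k.-1 * (et + Lf * e))
  <= c * k.+1%:R ^+ 2 * M ^+ k * et + c * k.+1%:R * M ^+ k * e.
Proof.
move=> M1 LfM c0 et0 e0.
set P := M ^+ k.-1; set Q := M ^+ k.
have M0 : 0 <= M by apply: le_trans M1; exact: ler01.
have P0 : 0 <= P by rewrite exprn_ge0.
have Q1 : 1 <= Q by rewrite exprn_ege1.
have PQ : P <= Q.
  by rewrite /P /Q; case: (k) => [|k'] /=; rewrite ?lexx // exprS ler_peMl // exprn_ge0.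
have kPM : k%:R * P * M = k%:R * Q.
  by rewrite /P /Q; case: (k) => [|k'] /=; rewrite ?mul0r // exprS -mulrA (mulrC _ M).
set kk := k%:R.
have kk0 : 0 <= kk by rewrite ler0n.
rewrite -natr1 -/kk.
have F1 : c * kk ^+ 2 * P * et <= c * kk ^+ 2 * Q * et.
  have : 0 <= c * kk ^+ 2 * et by rewrite !mulr_ge0 // sqr_ge0.
  nra.
have F2 : c * kk * P * et <= c * kk * Q * et.
  have : 0 <= c * kk * et by rewrite !mulr_ge0.
  nra.
have Q0 : 0 <= Q by apply: le_trans Q1; exact: ler01.
have F3 : 0 <= c * Q * et by rewrite !mulr_ge0.
have F3' : 0 <= c * kk * Q * et by rewrite !mulr_ge0.
have F4 : c * kk * P * Lf * e <= c * kk * Q * e.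
  have : 0 <= c * kk * P * e by rewrite !mulr_ge0.
  have : c * kk * P * M * e = c * kk * Q * e.
    transitivity (c * (kk * P * M) * e); first ring. by rewrite kPM; ring.
  nra.
have F5 : c * e <= c * Q * e.
  have : 0 <= c * e by rewrite mulr_ge0.
  nra.
lra.
Qed.

Definition Pk k (M : R) := forall x y : 'rV[R]_(p + n), `|V k x - V k y| <=
  LR * k%:R ^+ 2 * M ^+ k.-1 * enorm (lsubmx x - lsubmx y)
  + LR * k%:R * M ^+ k.-1 * enorm (x - y).

Lemma Vstep k (M : R) : 1 <= M -> Lf <= M -> 0 <= LR -> Pk k M -> Pk k.+1 M.
Proof.
move=> M1 LfM c0 IH x y.
set A := LR * k%:R ^+ 2 * M ^+ k.-1; set B := LR * k%:R * M ^+ k.-1.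
have M0 : 0 <= M by apply: le_trans M1; exact: ler01.
have A0 : 0 <= A by rewrite !mulr_ge0 ?exprn_ge0 ?sqr_ge0.
have B0 : 0 <= B by rewrite !mulr_ge0 ?exprn_ge0 ?ler0n.
have HK : forall x y, `|V k x - V k y| <= (A + B) * enorm (x - y).
  move=> x' y'; apply: le_trans (IH x' y') _.
  rewrite mulrDl lerD2r ler_wpM2l // lsubB; exact: enorm_lsub_le.
have ix := intG (addr_ge0 A0 B0) HK x.
have iy := intG (addr_ge0 A0 B0) HK y.
set et := enorm (lsubmx x - lsubmx y); set e := enorm (x - y).
have et0 : 0 <= et by exact: enorm_ge0.
have e0 : 0 <= e by exact: enorm_ge0.
set Bd := LR * e + (A * et + B * (et + Lf * e)).
have pw : forall w, `|Gfun k x w - Gfun k y w| <= Bd.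
  move=> w; rewrite /Gfun opprD addrACA.
  apply: le_trans (ler_normD _ _) _.
  apply: lerD; first exact: HRL.
  apply: le_trans (IH _ _) _; rewrite !row_mxKl -/et lerD2l ler_wpM2l //.
  rewrite opp_row_mx add_row_mx; apply: le_trans (enorm_row_mx_le _ _) _.
  rewrite lerD2l opprD addrACA subrr addr0.
  exact: ftil_lip_x.
have ib : PP.-integrable setT (EFin \o (fun w => Gfun k x w - Gfun k y w)).
  apply: (eq_integrable measurableT) (integrableB measurableT ix iy).
  by move=> w _ /=; rewrite EFinB.
have PP1 : fine (PP setT) = 1 by rewrite [X in fine X]PP_setT.
rewrite !VS -RintegralB // ler_norml; apply/andP; split.
  apply: le_trans (le_Rintegral measurableT (int_cst (- Bd)) ib _).
    by rewrite Rintegral_cst // PP1 mulr1 lerN2 /Bd /A /B; exact: arith.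
  by move=> w _ /=; have := pw w; rewrite ler_norml => /andP [].
apply: le_trans (le_Rintegral measurableT ib (int_cst Bd) _) _.
  by move=> w _ /=; have := pw w; rewrite ler_norml => /andP [].
rewrite Rintegral_cst // PP1 mulr1 /Bd /A /B.
exact: arith.
Qed.

Lemma Vall (M : R) : 1 <= M -> Lf <= M -> 0 <= LR -> forall k, Pk k M.
Proof.
move=> M1 LfM c0; elim => [|k IH].
  by move=> x y /=; rewrite subrr normr0 expr0n /= !mulr0 !mul0r addr0.
exact: Vstep.
Qed.

Lemma final (T t : nat) (Ldf : R) : 0 <= LR -> (t <= T)%N ->
  lipschitz_scal
      (3 * (T%:R) ^+ 2 * LR
         * (Num.max Ldf (Num.max Lf 1)) ^ (T%:Z - t%:Z - 1))
      (Vtil Px Pz xi zeta f pi Rw T t).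
Proof.
move=> c0 tT x y.
set M := Num.max Ldf (Num.max Lf 1).
have M1 : 1 <= M by rewrite /M !le_max lexx !orbT.
have LfM : Lf <= M by rewrite /M !le_max lexx !orbT.
have M0 : 0 <= M by apply: le_trans M1; exact: ler01.
have e0 : 0 <= enorm (x - y) by exact: enorm_ge0.
rewrite /Vtil.
have P := Vall M1 LfM c0 (T - t) x y.
move: P; case k: (T - t)%N => [|k'] P.
  rewrite /= subrr normr0 mulr_ge0 // mulr_ge0 ?exprz_ge0 // mulr_ge0 //.
have -> : T%:Z - t%:Z - 1 = k'%:Z by lia.
rewrite -exprnP.
apply: le_trans P _.
set N := k'.+1%:R; set Mk := M ^+ k'.+1.-1; set e := enorm (x - y).
have Mk0 : 0 <= Mk by rewrite exprn_ge0.
have et : enorm (lsubmx x - lsubmx y) <= e by rewrite lsubB; exact: enorm_lsub_le.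
have X0 : 0 <= LR * Mk by rewrite mulr_ge0.
have N0 : 0 <= N by rewrite ler0n.
have h1 : LR * N ^+ 2 * Mk * enorm (lsubmx x - lsubmx y) <= LR * N ^+ 2 * Mk * e.
  by rewrite ler_wpM2l // !mulr_ge0 // sqr_ge0.
have hN : N ^+ 2 + N <= 3 * T%:R ^+ 2.
  rewrite /N -natrX -natrD -natrX -[3]/(3%:R) -natrM ler_nat; lia.
apply: (le_trans (_ : _ <= LR * Mk * e * (N ^+ 2 + N))).
  have : LR * N * Mk * e = LR * Mk * e * N by ring.
  lra.
rewrite [X in _ <= X](_ : _ = LR * Mk * e * (3 * T%:R ^+ 2)); last by rewrite /Mk /=; ring.
by rewrite ler_wpM2l // mulr_ge0.
Qed.

End Main.

Theorem lemma4 (R : realType)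
  (dx dz : measure_display) (Ox : measurableType dx) (Oz : measurableType dz)
  (Px : probability Ox R) (Pz : probability Oz R)
  (p n a : nat)
  (xi : Ox -> 'rV[R]_a) (zeta : Oz -> 'rV[R]_n)
  (f : 'rV[R]_n -> 'rV[R]_a -> 'rV[R]_n)
  (pi : 'rV[R]_p -> 'rV[R]_n -> 'rV[R]_a)
  (Rw : 'rV[R]_n -> 'rV[R]_a -> R)
  (T : nat) (Lf Ldf LR : R) :
  (* the noises are random vectors with finite first moments *)
  (forall i : 'I_a, measurable_fun setT (fun w => xi w 0 i)) ->
  (forall i : 'I_n, measurable_fun setT (fun w => zeta w 0 i)) ->
  Px.-integrable setT (fun w => (enorm (xi w))%:E) ->
  Pz.-integrable setT (fun w => (enorm (zeta w))%:E) ->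
  (* standing assumptions on \tilde f_theta *)
  lipschitz_vec Lf (ftilJ f pi (p:=p)) ->
  twice_cont_diff (ftilJ f pi (p:=p)) ->
  (forall z z', enorm (jacobian (ftilJ f pi (p:=p)) z
                       - jacobian (ftilJ f pi (p:=p)) z')
                <= Ldf * enorm (z - z')) ->
  (* standing assumptions on \tilde R_theta *)
  lipschitz_scal LR (RtilJ Px xi pi Rw (p:=p)) ->
  twice_cont_diff (RtilJ Px xi pi Rw (p:=p)) ->
  (exists LdR : R, forall x y, enorm (gradient (RtilJ Px xi pi Rw (p:=p)) x
                                      - gradient (RtilJ Px xi pi Rw (p:=p)) y)
                               <= LdR * enorm (x - y)) ->
  forall t : nat, (t <= T)%N ->
    lipschitz_scal
      (3 * (T%:R) ^+ 2 * LR
         * (Num.max Ldf (Num.max Lf 1)) ^ (T%:Z - t%:Z - 1))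
      (Vtil Px Pz xi zeta f pi Rw T t).
Proof.
move=> mxi mzeta ixi izeta HfL _ _ HRL _ _ t tT x y.
have [->|xy] := eqVneq x y.
  by rewrite subrr normr0 subrr enorm0 mulr0.
have LR0 : 0 <= LR.
  have e0 : 0 < enorm (x - y).
    rewrite lt_def enorm_ge0 andbT; apply/eqP => /enorm_eq0 /eqP.
    by rewrite subr_eq0 (negbTE xy).
  have := HRL x y => H.
  have : 0 <= LR * enorm (x - y) by apply: le_trans H.
  by rewrite pmulr_lge0.
exact: (final mxi mzeta ixi izeta HfL HRL Ldf LR0 tT).
Qed.
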